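(* For every integer $R$ with $0\le R<\ell$ and every $y\in\{0,1\}^n$ with $y\ne0^n$, $$\Big\|\sum_{o\in[R]}\big(\mathrm{id}-\mathsf{QE}_{=o}\big)\cdot\tilde H_y\cdot\mathsf{QEC}_{(R,=o)}\Big\|_{\mathrm{op}}\le\frac{R^5}{\sqrt\ell}.$$
   Context: $[m]=\{0,1,\dots,m-1\}$. Bosonic setting with $2^n$ modes indexed by $\{0,1\}^n$: position operators $\hat a_x,\hat a_x^\dagger$ with standard bosonic commutation relations, vacuum $|\mathrm{vac}\rangle$, momentum operators $\tilde a_y=2^{-n/2}\sum_x(-1)^{x\cdot y}\hat a_x$ and $\tilde a_y^\dagger$ likewise, momentum Fock states $|u\rangle=\prod_y(\tilde a_y^\dagger)^{u_y}(u_y!)^{-1/2}|\mathrm{vac}\rangle$. Work in the $\ell$-boson subspace ($\sum_yu_y=\ell$). $\tilde H_y=\frac1\ell\sum_{x,x'}\tilde a^\dagger_{x\oplus y}\tilde a^\dagger_{x'\oplus y}\tilde a_x\tilde a_{x'}$. $\mathsf{Con}_R$ projects onto momentum Fock states with $u_{0^n}\ge\ell-R$; $\mathsf{QE}_{=o}$ projects onto those with exactly $o$ odd entries $u_y$ among $y\ne0^n$; $\mathsf{QEC}_{(R,=o)}=\mathsf{Con}_R\mathsf{QE}_{=o}$. *)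

(* Defs.v *)
(* Momentum-mode Fock space of 2^n bosonic modes, scalars in algC. *)
From mathcomp Require Import all_boot all_order all_algebra all_field.
Set Implicit Arguments. Unset Strict Implicit. Unset Printing Implicit Defensive.
Import Order.TTheory GRing.Theory Num.Theory.
Local Open Scope ring_scope.

Definition Mode (n : nat) := {ffun 'I_n -> bool}.
Definition mode0 (n : nat) : Mode n := [ffun => false].
Definition mxor (n : nat) (x y : Mode n) : Mode n := [ffun i => addb (x i) (y i)].

(* Occupation-number vectors u = (u_y)_y of momentum Fock states |u>. *)
Definition Occ (n : nat) := {ffun Mode n -> nat}.
(* Vectors in the Fock space: coefficient functions on momentum Fock states. *)
Definition State (n : nat) := Occ n -> algC.

Definition occ_inc n (x : Mode n) (u : Occ n) : Occ n := [ffun m => (u m + (m == x))%N].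
Definition occ_dec n (x : Mode n) (u : Occ n) : Occ n := [ffun m => (u m - (m == x))%N].

(* Momentum annihilation  a~_x |v> = sqrt(v_x) |v - e_x>  written on coefficients. *)
Definition ann n (x : Mode n) (f : State n) : State n :=
  fun u => sqrtC ((u x).+1)%:R * f (occ_inc x u).
(* Momentum creation  a~_x^dag |v> = sqrt(v_x + 1) |v + e_x>  written on coefficients. *)
Definition cre n (x : Mode n) (f : State n) : State n :=
  fun u => sqrtC (u x)%:R * f (occ_dec x u).

Definition Htil n (l : nat) (y : Mode n) (f : State n) : State n :=
  fun u => (l%:R)^-1 * \sum_(x : Mode n) \sum_(x' : Mode n)
     cre (mxor x y) (cre (mxor x' y) (ann x (ann x' f))) u.

Definition Con n (l R : nat) (f : State n) : State n :=
  fun u => if (l - R <= u (mode0 n))%N then f u else 0.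

Definition nodd n (u : Occ n) : nat := #|[set y : Mode n | (y != mode0 n) && odd (u y)]|.

Definition QE n (o : nat) (f : State n) : State n :=
  fun u => if nodd u == o then f u else 0.

Definition QEC n (l R o : nat) (f : State n) : State n := Con l R (QE o f).

Definition Top n (l R : nat) (y : Mode n) (f : State n) : State n :=
  fun u => \sum_(o < R) (Htil l y (QEC l R o f) u - QE o (Htil l y (QEC l R o f)) u).

Definition inSector n (l : nat) (u : Occ n) : bool := (\sum_(m : Mode n) u m == l)%N.
Definition inBosonSpace n (l : nat) (f : State n) : Prop :=
  forall u, ~~ inSector l u -> f u = 0.
Definition toOcc n l (g : {ffun Mode n -> 'I_l.+1}) : Occ n := [ffun m => nat_of_ord (g m)].

(* Euclidean norm on the l-boson subspace (its Fock states all have u_y <= l). *)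
Definition bnorm n (l : nat) (f : State n) : algC :=
  sqrtC (\sum_(g : {ffun Mode n -> 'I_l.+1} | inSector l (toOcc g)) `|f (toOcc g)| ^+ 2).

(* Main.v *)
Require Import Defs.
From mathcomp Require Import all_boot all_order all_algebra all_field.
From mathcomp Require Import zify ring.
Import Order.TTheory GRing.Theory Num.Theory.
Local Open Scope ring_scope.
Set Implicit Arguments. Unset Strict Implicit. Unset Printing Implicit Defensive.

Lemma cs_real (I : finType) (A : {pred I}) (a : I -> algC) : (forall i, a i \is Num.real) ->
  (\sum_(i in A) a i) ^+ 2 <= #|A|%:R * \sum_(i in A) a i ^+ 2.
Proof.
move=> ha; rewrite expr2 mulr_suml.
apply: (@le_trans _ _ (\sum_(i in A) \sum_(j in A) (a i ^+ 2 + a j ^+ 2) / 2)).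
  apply: ler_sum => i _; rewrite mulr_sumr; apply: ler_sum => j _.
  exact: (real_leif_mean_square (ha i) (ha j)).1.
set S := \sum_(i in A) a i ^+ 2.
have -> : \sum_(i in A) \sum_(j in A) (a i ^+ 2 + a j ^+ 2) / 2 =
    (\sum_(i in A) \sum_(j in A) a i ^+ 2 + \sum_(i in A) \sum_(j in A) a j ^+ 2) / 2.
  rewrite -big_split mulr_suml /=; apply: eq_bigr => i _.
  by rewrite -big_split mulr_suml /=.
have -> : \sum_(i in A) \sum_(j in A) a i ^+ 2 = S *+ #|A|.
  rewrite /S -sumrMnl; apply: eq_bigr => i _; by rewrite sumr_const.
rewrite sumr_const -/S -mulr2n -mulrnA mulr_natl.
rewrite le_eqVlt; apply/orP; left; apply/eqP.
rewrite mulrnA mulr2n -mulr_natl -[in RHS]mulr_natl.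
have h2 : (2 : algC) != 0 by rewrite pnatr_eq0.
by field.
Qed.

Lemma cs_C (I : finType) (A : {pred I}) (z : I -> algC) :
  (forall i, z i != 0 -> i \in A) ->
  `|\sum_i z i| ^+ 2 <= #|A|%:R * \sum_i `|z i| ^+ 2.
Proof.
move=> hz.
have -> : \sum_i z i = \sum_(i in A) z i.
  rewrite [LHS](bigID (mem A)) /= [X in _ + X]big1 ?addr0 // => i hi.
  by apply/eqP; apply: contraR hi => /hz.
apply: (@le_trans _ _ ((\sum_(i in A) `|z i|) ^+ 2)).
  by rewrite !expr2; apply: ler_pM => //; apply: ler_norm_sum.
apply: (le_trans (@cs_real I A (fun i => `|z i|) _)); first by move=> i; apply: normr_real.
apply: ler_wpM2l => //; rewrite [X in _ <= X](bigID (mem A)) /= lerDl.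
by apply: sumr_ge0 => i _; apply: exprn_ge0.
Qed.

Lemma numeric0 (R : nat) : (2 <= R)%N -> (R.+2 * R.+1 * (R * R.+1 * (5 * R + 2)) <= R ^ 10)%N.
Proof.
move=> h.
have h5 : (32 <= R ^ 5)%N by rewrite -[32%N]/(2 ^ 5)%N leq_exp2r.
have -> : (R ^ 10 = R ^ 5 * R ^ 5)%N by rewrite -expnD.
have e5 : (R ^ 5 = R * R * R * R * R)%N by rewrite !expnS expn0 muln1 !mulnA.
rewrite e5 in h5 *.
nia.
Qed.

Lemma sum_le_one (I : finType) (P : pred I) (F : I -> algC) B : 0 <= B ->
  (forall i j, P i -> P j -> i = j) -> (forall i, P i -> F i <= B) ->
  \sum_(i | P i) F i <= B.
Proof.
move=> hB hu hF; case: (pickP P) => [i0 hi0|h0]; last by rewrite big_pred0.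
rewrite (big_pred1 i0) ?hF // => j; apply/idP/eqP => [hj|->//]; exact: hu hj hi0.
Qed.

Section Pf.
Variables (n l R : nat) (y : Mode n).
Hypothesis RL : (R < l)%N.
Hypothesis y0 : y != mode0 n.

Definition U1 (v : Occ n) x := occ_dec (mxor x y) v.
Definition U2 v x x' := occ_dec (mxor x' y) (U1 v x).
Definition U3 v x x' := occ_inc x (U2 v x x').
Definition W v x x' := occ_inc x' (U3 v x x').
Definition alpha (v : Occ n) x x' : algC :=
  sqrtC (v (mxor x y))%:R * (sqrtC ((U1 v x) (mxor x' y))%:R *
   (sqrtC ((U2 v x x' x).+1)%:R * sqrtC ((U3 v x x' x').+1)%:R)).

Lemma Hexp (f : State n) v : Htil l y f v =
  l%:R^-1 * \sum_x \sum_x' alpha v x x' * f (W v x x').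
Proof.
rewrite /Htil; congr (_ * _); apply: eq_bigr => x _; apply: eq_bigr => x' _.
by rewrite /cre /ann /alpha /W /U3 /U2 /U1 !mulrA.
Qed.

Definition beta (v w : Occ n) : algC :=
  ((l - R <= w (mode0 n))%N && (nodd w < R)%N && (nodd w != nodd v))%:R.

Definition gamma v x x' := l%:R^-1 * alpha v x x' * beta v (W v x x').

Lemma sumo (psi : State n) v w :
  \sum_(o < R) (if nodd v == o then 0 else QEC l R o psi w) = beta v w * psi w.
Proof.
rewrite /QEC /Con /QE /beta.
case: (l - R <= w (mode0 n))%N; last by rewrite big1 ?mul0r //= => o _; case: ifP.
case: (ltnP (nodd w) R) => h /=.
  rewrite (bigD1 (Ordinal h)) //= big1 ?addr0.
    rewrite eq_refl; case: eqP => [->|hn]; first by rewrite eq_refl mul0r.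
    by move/eqP: hn; rewrite eq_sym => /negPf ->; rewrite mul1r.
  move=> o /eqP ho; case: ifP => // _; case: ifP => // /eqP ho'.
  by exfalso; apply: ho; apply: val_inj; rewrite /= ho'.
rewrite big1 ?mul0r // => o _; case: ifP => // _; case: ifP => // /eqP ho.
by move: (ltn_ord o); rewrite -ho ltnNge h.
Qed.

Lemma Texp (psi : State n) v : Top l R y psi v =
  \sum_x \sum_x' gamma v x x' * psi (W v x x').
Proof.
rewrite /Top.
have -> : \sum_(o < R) (Htil l y (QEC l R o psi) v - QE o (Htil l y (QEC l R o psi)) v)
   = \sum_(o < R) l%:R^-1 * \sum_x \sum_x' alpha v x x' *
       (if nodd v == o then 0 else QEC l R o psi (W v x x')).
  apply: eq_bigr => o _; rewrite /QE Hexp; case: ifP => _.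
    rewrite subrr big1 ?mulr0 // => x _; rewrite big1 // => x' _; by rewrite mulr0.
  by rewrite subr0.
rewrite -mulr_sumr exchange_big /= mulr_sumr; apply: eq_bigr => x _.
rewrite exchange_big /= mulr_sumr; apply: eq_bigr => x' _.
by rewrite -mulr_sumr sumo /gamma !mulrA.
Qed.


Lemma mxorK x : mxor (mxor x y) y = x.
Proof. by apply/ffunP => i; rewrite !ffunE addbK. Qed.

Lemma mxor_inj : injective (fun x => mxor x y).
Proof. by move=> a b /= h; rewrite -(mxorK a) h mxorK. Qed.

Lemma mxor_neq x : mxor x y != x.
Proof.
apply/negP => /eqP h; move/negP: y0; apply; apply/eqP/ffunP => i.
by move/ffunP: h => /(_ i); rewrite !ffunE; case: (x i); case: (y i).
Qed.

Lemma mxor_sym x x' : (x' == mxor x y) = (x == mxor x' y).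
Proof.
apply/eqP/eqP => ->; by rewrite mxorK.
Qed.

Definition valid (v : Occ n) x x' :=
  (0 < v (mxor x y))%N && (0 < U1 v x (mxor x' y))%N.

Lemma alpha_valid v x x' : alpha v x x' != 0 -> valid v x x'.
Proof.
rewrite /alpha /valid; case: (v (mxor x y)) => [|a]; first by rewrite sqrtC0 mul0r eqxx.
case: (U1 v x (mxor x' y)) => [|b]; first by rewrite sqrtC0 mul0r mulr0 eqxx.
by [].
Qed.

Lemma natfact (vm : nat) (a b c d : bool) : (a -> 0 < vm)%N -> (b -> 0 < vm - a)%N ->
  (vm - a - b + c + d + a + b = vm + c + d)%N.
Proof. move=> h1 h2; lia. Qed.

Lemma Wid v x x' : valid v x x' -> forall m,
  (W v x x' m + (m == mxor x y) + (m == mxor x' y) = v m + (m == x) + (m == x'))%N.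
Proof.
case/andP => h1 h2 m; rewrite /W /U3 /U2 /U1 /occ_inc /occ_dec !ffunE.
apply: natfact; first by move/eqP => ->.
by move/eqP => ->; move: h2; rewrite /U1 /occ_dec ffunE.
Qed.

Lemma W_inj v1 v2 x x' : valid v1 x x' -> valid v2 x x' ->
  W v1 x x' = W v2 x x' -> v1 = v2.
Proof.
move=> h1 h2 e; apply/ffunP => m.
have := Wid h1 m; have := Wid h2 m; rewrite e => A; rewrite A => /eqP; by rewrite !eqn_add2r => /eqP ->.
Qed.

Lemma nodd_eq (u v : Occ n) : (forall m, odd (u m) = odd (v m)) -> nodd u = nodd v.
Proof.
move=> h; rewrite /nodd; apply: eq_card => m; by rewrite !inE h.
Qed.

Lemma parity_same v x x' : valid v x x' ->
  (x == x') || (x' == mxor x y) -> nodd (W v x x') = nodd v.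
Proof.
move=> hv /orP [/eqP e|/eqP e]; apply: nodd_eq => m; have := Wid hv m.
  rewrite -e => h; have : odd (W v x x m + (m == mxor x y) + (m == mxor x y)) =
     odd (v m + (m == x) + (m == x)) by rewrite h.
  by rewrite -!addnA !oddD !addbb !addbF.
rewrite e mxorK => h.
have -> : W v x (mxor x y) m = v m.
  by move: h; rewrite [RHS]addnAC => /addIn /addIn.
by [].
Qed.

Lemma active v x x' : gamma v x x' != 0 ->
  [/\ valid v x x', x != x', x' != mxor x y,
      (l - R <= W v x x' (mode0 n))%N & (nodd (W v x x') < R)%N].
Proof.
rewrite /gamma /beta => h.
have ha : alpha v x x' != 0 by apply/eqP => e; move: h; rewrite e mulr0 mul0r eqxx.
have hv := alpha_valid ha.
move: h; case: (l - R <= _)%N; last by rewrite /= mulr0 eqxx.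
case: (nodd _ < R)%N; last by rewrite /= mulr0 eqxx.
case: (nodd (W v x x') =P nodd v) => hn; first by rewrite /= mulr0 eqxx.
move=> _; split => //.
  by apply/negP => e; apply: hn; apply: parity_same => //; rewrite e.
by apply/negP => e; apply: hn; apply: parity_same => //; rewrite e orbT.
Qed.


Lemma distinct4 x x' : x != x' -> x' != mxor x y ->
  [/\ (x == mxor x y) = false, (x' == mxor x' y) = false,
      (mxor x y == mxor x' y) = false, (x == mxor x' y) = false &
      (mxor x y == x') = false].
Proof.
move=> h1 h2; split; apply/negbTE.
- by rewrite eq_sym mxor_neq.
- by rewrite eq_sym mxor_neq.
- by apply: contra h1 => /eqP /mxor_inj ->.
- by rewrite -mxor_sym.
- by rewrite eq_sym.
Qed.

Definition ColW (w : Occ n) x x' : nat :=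
  if [&& (l - R <= w (mode0 n))%N, (nodd w < R)%N, x != x' & x' != mxor x y]
  then ((w (mxor x y)).+1 * (w (mxor x' y)).+1 * w x * w x')%N else 0%N.

Lemma normsq_sqrt (k : nat) : `|sqrtC (k%:R : algC)| ^+ 2 = k%:R.
Proof. by rewrite ger0_norm ?sqrtC_ge0 ?ler0n // sqrtCK. Qed.

Lemma gamma_norm v x x' :
  `|gamma v x x'| ^+ 2 <= (l%:R^-1) ^+ 2 * (ColW (W v x x') x x')%:R.
Proof.
have [->|hg] := eqVneq (gamma v x x') 0.
  by rewrite normr0 expr0n /= mulr_ge0 ?ler0n // exprn_ge0 // invr_ge0 ler0n.
have [hv h1 h2 h3 h4] := active hg.
rewrite /gamma /beta h3 h4 /= /ColW h3 h4 h1 h2 /=.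
have -> : (nodd (W v x x') != nodd v) = true.
  by apply/negP => /eqP e; move: hg; rewrite /gamma /beta e eqxx /= andbF mulr0 eqxx.
rewrite mulr1 normrM exprMn [`|l%:R^-1|]ger0_norm ?invr_ge0 ?ler0n //.
apply: ler_wpM2l; first by rewrite exprn_ge0 // invr_ge0 ler0n.
rewrite /alpha !normrM !exprMn !normsq_sqrt -!natrM le_eqVlt; apply/orP; left.
apply/eqP; congr (_%:R).
have [d1 d2 d3 d4 d5] := distinct4 h1 h2.
have e1 := Wid hv (mxor x y); have e2 := Wid hv (mxor x' y).
have e3 := Wid hv x; have e4 := Wid hv x'.
move: e1 e2 e3 e4; rewrite !eqxx d1 d2 d3 d4 d5 [mxor x' y == _]eq_sym d3
  [x' == _]eq_sym d5 [x' == x]eq_sym (negbTE h1) [mxor x' y == x]eq_sym d4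
  [mxor x y == x]eq_sym d1 [mxor x' y == x']eq_sym d2 /= => e1 e2 e3 e4.
rewrite ?addn0 ?add0n ?addn1 in e1 e2 e3 e4.
rewrite e1 e2 e3 e4 /U3 /U2 /U1 /occ_inc /occ_dec !ffunE.
rewrite [mxor x' y == _]eq_sym d3 d1 d4 (negbTE h2) d2 [x' == x]eq_sym (negbTE h1) /= !subn0 addn0.
by rewrite !mulnA.
Qed.


Lemma reindex2 (H : Mode n -> Mode n -> nat) :
  (\sum_x \sum_x' H (mxor x y) (mxor x' y) = \sum_p \sum_p' H p p')%N.
Proof.
rewrite [RHS](reindex_inj mxor_inj) /=; apply: eq_bigr => x _.
by rewrite [RHS](reindex_inj mxor_inj).
Qed.

Lemma sector_split (u : Occ n) : inSector l u ->
  (u (mode0 n) + \sum_(m | m != mode0 n) u m = l)%N.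
Proof. by rewrite /inSector (bigD1 (mode0 n)) //= => /eqP. Qed.

Lemma le_sector (u : Occ n) m : inSector l u -> (u m <= l)%N.
Proof.
rewrite /inSector (bigD1 m) //= => /eqP <-; exact: leq_addr.
Qed.

Lemma count_le (u : Occ n) :
  (\sum_m (0 < u m)%N <= 1 + \sum_(m | m != mode0 n) u m)%N.
Proof.
rewrite (bigD1 (mode0 n)) //=; apply: leq_add; first by case: (0 < _)%N.
by apply: leq_sum => m _; case: (u m).
Qed.

Lemma row_bound v : inSector l v ->
  (\sum_x \sum_x' (gamma v x x' != 0%R : nat) <= R.+2 * R.+1)%N.
Proof.
move=> hs.
case: (boolP [exists x, exists x', gamma v x x' != 0]); last first.
  move=> /existsPn h; rewrite big1 // => x _; rewrite big1 // => x' _.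
  by move/existsPn: (h x) => /(_ x') /negbTE ->.
case/existsP => x0 /existsP [x0' hg].
have [hv h1 h2 h3 h4] := active hg.
have hv0 : (l - R <= (v (mode0 n)).+1)%N.
  apply: (leq_trans h3); have e := Wid hv (mode0 n).
  have hb : ((mode0 n == x0) + (mode0 n == x0') <= 1)%N.
    case: eqP => [e1|]; case: eqP => [e'|] //=.
    by move: h1; rewrite -e1 -e' eqxx.
  rewrite -addn1; apply: (leq_trans (leq_addr ((mode0 n == mxor x0' y) : nat) _)).
  apply: (leq_trans (leq_addr ((mode0 n == mxor x0 y) : nat) _)).
  by rewrite addnAC e -addnA leq_add2l.
have hsp := sector_split hs.
have hs2 : (\sum_m (0 < v m)%N <= R.+2)%N.
  apply: (leq_trans (count_le v)); lia.
apply: (@leq_trans (\sum_x \sum_x' ((0 < v (mxor x y)) * (0 < v (mxor x' y)) *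
                      (mxor x y != mxor x' y))%N)).
  apply: leq_sum => x _; apply: leq_sum => x' _.
  case: (boolP (gamma v x x' != 0)) => // hg'.
  have [/andP [a1 a2] b1 _ _ _] := active hg'.
  rewrite a1 /=; move: a2; rewrite /U1 /occ_dec ffunE => a2.
  have -> : (0 < v (mxor x' y))%N by apply: leq_trans a2 (leq_subr _ _).
  by rewrite (inj_eq mxor_inj) b1.
rewrite (reindex2 (fun p p' => (0 < v p) * (0 < v p') * (p != p'))%N).
set s := (\sum_m (0 < v m)%N)%N in hs2 *.
apply: (@leq_trans (\sum_p (0 < v p) * s.-1)%N).
  apply: leq_sum => p _; apply: (@leq_trans ((0 < v p) * \sum_p' (0 < v p') * (p != p'))%N).
    by rewrite big_distrr; apply: leq_sum => p' _ /=; rewrite mulnA.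
  case: (boolP (0 < v p)%N) => hp; last by [].
  rewrite /s (bigD1 p) //= eqxx muln0 add0n mul1n [in X in (_ <= X)%N](bigD1 p) //= hp /= ?add1n /=.
  rewrite mul1n add0n; apply: leq_sum => i hi; by rewrite eq_sym hi muln1.
rewrite -big_distrl /= -/s; apply: leq_mul => //.
by rewrite -subn1; lia.
Qed.


Lemma mxor0 : mxor (mode0 n) y = y.
Proof. by apply/ffunP => i; rewrite !ffunE. Qed.

Lemma mxorvv : mxor y y = mode0 n.
Proof. by apply/ffunP => i; rewrite !ffunE addbb. Qed.

Lemma mxor_eq0 x : (mxor x y == mode0 n) = (x == y).
Proof.
apply/eqP/eqP => [e|->]; last exact: mxorvv.
by rewrite -(mxorK x) e mxor0.
Qed.

Lemma le_nonzero (u : Occ n) m : m != mode0 n ->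
  (u m <= \sum_(m' | m' != mode0 n) u m')%N.
Proof. by move=> hm; rewrite (bigD1 m) //= leq_addr. Qed.

Lemma ColW_R2 w x x' : inSector l w -> ColW w x x' != 0%N -> (2 <= R)%N.
Proof.
move=> hs; rewrite /ColW; case: ifP => [/and4P [c1 c2 c3 c4]|]; last by rewrite eqxx.
rewrite !muln_eq0 !negb_or => /andP [/andP [_ hx] hx'].
rewrite leqNgt; apply/negP => hR.
have hsp := sector_split hs.
have [m [hm0 hm]] : exists m, m != mode0 n /\ (0 < w m)%N.
  case: (eqVneq x (mode0 n)) => [e|ne]; last by exists x; rewrite lt0n.
  exists x'; rewrite lt0n; split => //; by rewrite -e eq_sym.
have hle := le_nonzero w hm0.
have wm1 : w m = 1%N.
  apply/eqP; rewrite eqn_leq hm andbT; apply: (leq_trans hle); lia.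
have : (0 < nodd w)%N.
  rewrite /nodd card_gt0; apply/set0Pn; exists m; by rewrite inE hm0 wm1.
lia.
Qed.

Lemma col_zero w : inSector l w -> (R < 2)%N -> (\sum_x \sum_x' ColW w x x' = 0)%N.
Proof.
move=> hs hR; rewrite big1 // => x _; rewrite big1 // => x' _.
apply/eqP; apply: contraLR hR => h; rewrite -leqNgt; exact: ColW_R2 h.
Qed.

Lemma col_bound w : inSector l w ->
  (\sum_x \sum_x' ColW w x x' <= l * (R * R.+1 * (5 * R + 2)))%N.
Proof.
move=> hs.
case: (boolP ((l - R <= w (mode0 n))%N && (nodd w < R)%N)) => hA; last first.
  rewrite big1 // => x _; rewrite big1 // => x' _; rewrite /ColW.
  by case: (l - R <= _)%N hA => //=; case: (nodd w < R)%N.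
case/andP: hA => hA1 hA2.
have hsp := sector_split hs.
pose a x := (w x * (w (mxor x y)).+1)%N.
pose Z x := (x == mode0 n) || (x == y).
apply: (@leq_trans (\sum_x \sum_x' (~~ (Z x && Z x')) * (a x * a x'))%N).
  apply: leq_sum => x _; apply: leq_sum => x' _; rewrite /ColW hA1 hA2 /=.
  case: (boolP ((x != x') && (x' != mxor x y))) => //= /andP [h1 h2].
  have -> : ~~ (Z x && Z x').
    rewrite /Z; apply/negP => /andP [/orP [] /eqP e1 /orP [] /eqP e2]; move: h1 h2; rewrite e1 e2.
    - by rewrite eqxx.
    - by rewrite mxor0 eqxx.
    - by rewrite mxorvv eqxx.
    - by rewrite eqxx.
  by rewrite /= mul1n /a leq_eqVlt; apply/orP; left; apply/eqP; ring.
set b := (\sum_(x | Z x) a x)%N.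
set c := (\sum_(x | ~~ Z x) a x)%N.
have -> : (\sum_x \sum_x' (~~ (Z x && Z x')) * (a x * a x') = b * c + c * (b + c))%N.
  rewrite (bigID Z) /=; congr (_ + _)%N.
    rewrite /b big_distrl /=; apply: eq_bigr => x hx.
    rewrite /c big_distrr /= (bigID Z) /= big1 ?add0n; last first.
      by move=> x' hx'; rewrite hx hx'.
    by apply: eq_bigr => x' hx'; rewrite hx (negbTE hx') /= mul1n.
  rewrite [in RHS]/c big_distrl /=; apply: eq_bigr => x hx.
  rewrite (bigID Z) /= mulnDr /b /c !big_distrr /=; congr (_ + _)%N;
    by apply: eq_bigr => x' _; rewrite (negbTE hx) /= mul1n.
have wy : (w y <= R)%N by apply: (leq_trans (le_nonzero w y0)); lia.
have w0l : (w (mode0 n) <= l)%N by lia.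
have hb : (b <= l * (2 * R + 1))%N.
  rewrite /b (bigD1 (mode0 n)) /=; last by rewrite /Z eqxx.
  rewrite (bigD1 y) /=; last by rewrite /Z eqxx orbT y0.
  rewrite big1 ?addn0; last first.
    by move=> x /andP [/andP [/orP [] -> //]]; rewrite andbF.
  rewrite /a mxor0 mxorvv.
  have h0 : (w y + w (mode0 n) <= l)%N by have := le_nonzero w y0; lia.
  have : (w (mode0 n) * (w y).+1 <= l * R.+1)%N by apply: leq_mul.
  have : (w y * (w (mode0 n)).+1 <= l * R)%N.
    case: (w y) wy h0 => [|k] hk hk'; first by rewrite mul0n.
    rewrite mulnC; apply: leq_mul => //; lia.
  lia.
have hc : (c <= R * R.+1)%N.
  rewrite /c; apply: (@leq_trans (\sum_(x | x != mode0 n) w x * R.+1)%N).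
    rewrite [X in (_ <= X)%N]big_mkcond [X in (X <= _)%N]big_mkcond /=.
    apply: leq_sum => x _; rewrite /Z negb_or.
    case: (x == mode0 n) => //=; case: (boolP (x == y)) => //= hxy.
    rewrite /a leq_mul2l ltnS; apply/orP; right.
    apply: (leq_trans (le_nonzero w _)); last by lia.
    by rewrite mxor_eq0.
  rewrite -big_distrl /= leq_mul2r; apply/orP; right.
  by rewrite -(leq_add2l (w (mode0 n))) hsp; lia.
apply: (@leq_trans (R * R.+1 * (2 * (l * (2 * R + 1)) + R * R.+1))%N).
  have -> : (b * c + c * (b + c) = c * (2 * b + c))%N by ring.
  by apply: leq_mul => //; apply: leq_add => //; rewrite leq_mul2l hb orbT.
nia.
Qed.


Definition toG (u : Occ n) : {ffun Mode n -> 'I_l.+1} := [ffun m => inord (u m)].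

Lemma toOccK u : inSector l u -> toOcc (toG u) = u.
Proof. by move=> hs; apply/ffunP => m; rewrite !ffunE inordK // ltnS le_sector. Qed.

Lemma toOcc_inj : injective (@toOcc n l).
Proof.
move=> g1 g2 e; apply/ffunP => m; apply: val_inj; move/ffunP: e => /(_ m).
by rewrite !ffunE.
Qed.

Lemma hnz (psi : State n) v x x' : inBosonSpace l psi ->
  `|gamma v x x'| ^+ 2 * `|psi (W v x x')| ^+ 2 != 0 ->
  gamma v x x' != 0 /\ inSector l (W v x x').
Proof.
move=> hpsi; rewrite mulf_eq0 negb_or !expf_eq0 /= !normr_eq0 => /andP [h1 h2].
split => //; apply/negPn/negP => hns; move: h2; by rewrite (hpsi _ hns) eqxx.
Qed.

Lemma inner (psi : State n) x x' : inBosonSpace l psi ->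
  \sum_(g : {ffun Mode n -> 'I_l.+1} | inSector l (toOcc g))
     `|gamma (toOcc g) x x'| ^+ 2 * `|psi (W (toOcc g) x x')| ^+ 2
  <= \sum_(g : {ffun Mode n -> 'I_l.+1} | inSector l (toOcc g))
     (l%:R^-1) ^+ 2 * (ColW (toOcc g) x x')%:R * `|psi (toOcc g)| ^+ 2.
Proof.
move=> hpsi.
set h := fun g : {ffun Mode n -> 'I_l.+1} =>
  `|gamma (toOcc g) x x'| ^+ 2 * `|psi (W (toOcc g) x x')| ^+ 2.
rewrite (bigID (fun g => h g != 0)) /= [X in _ + X]big1 ?addr0; last first.
  by move=> g /andP [_]; rewrite negbK => /eqP.
rewrite (partition_big (fun g => toG (W (toOcc g) x x'))
           (fun g' => inSector l (toOcc g'))); last first.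
  by move=> g /andP [_ /(hnz hpsi) [_ hs]]; rewrite toOccK.
apply: ler_sum => g' hg'.
apply: sum_le_one.
- by rewrite mulr_ge0 ?exprn_ge0 ?normr_ge0 // mulr_ge0 ?ler0n // exprn_ge0 // invr_ge0 ler0n.
- move=> g1 g2 /andP [/andP [_ /(hnz hpsi) [a1 s1]] /eqP e1].
  move=> /andP [/andP [_ /(hnz hpsi) [a2 s2]] /eqP e2].
  have [v1 _ _ _ _] := active a1; have [v2 _ _ _ _] := active a2.
  apply: toOcc_inj; apply: (W_inj v1 v2).
  by rewrite -(toOccK s1) -(toOccK s2) e1 e2.
- move=> g /andP [/andP [_ /(hnz hpsi) [a1 s1]] /eqP e1].
  have ew : W (toOcc g) x x' = toOcc g' by rewrite -e1 toOccK.
  rewrite /h -ew; apply: ler_wpM2r; first by rewrite exprn_ge0.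
  exact: gamma_norm.
Qed.


Definition colB : nat := if (R < 2)%N then 0%N else (l * (R * R.+1 * (5 * R + 2)))%N.

Lemma col_all w : inSector l w -> (\sum_x \sum_x' ColW w x x' <= colB)%N.
Proof. by rewrite /colB => hs; case: ifP => h; [rewrite col_zero | exact: col_bound]. Qed.

Lemma numeric : (R.+2 * R.+1 * colB <= R ^ 10 * l)%N.
Proof.
rewrite /colB; case: ifP => h; first by rewrite muln0.
rewrite mulnCA [X in (_ <= X)%N]mulnC leq_mul2l; apply/orP; right.
by apply: numeric0; rewrite leqNgt h.
Qed.

Lemma step1 (psi : State n) (g : {ffun Mode n -> 'I_l.+1}) : inSector l (toOcc g) ->
  `|Top l R y psi (toOcc g)| ^+ 2 <= (R.+2 * R.+1)%:R *
    \sum_x \sum_x' `|gamma (toOcc g) x x'| ^+ 2 * `|psi (W (toOcc g) x x')| ^+ 2.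
Proof.
move=> hs; rewrite Texp pair_bigA /= [X in _ * X]pair_bigA /=.
pose A := [pred k : Mode n * Mode n | gamma (toOcc g) k.1 k.2 != 0].
apply: (le_trans (@cs_C _ A _ _)).
  by move=> k hk; rewrite inE; apply/eqP => e; move: hk; rewrite e mul0r eqxx.
apply: ler_pM => //.
- by apply: sumr_ge0 => k _; rewrite exprn_ge0.
- rewrite ler_nat; apply: leq_trans (row_bound hs).
  rewrite pair_bigA /= -sum1_card big_mkcond /=.
  by apply: leq_sum => k _; rewrite inE; case: (_ != 0).
by rewrite le_eqVlt; apply/orP; left; apply/eqP; apply: eq_bigr => k _; rewrite normrM exprMn.
Qed.
Lemma dummy_zz : True. Proof.
 by [].
Qed.


Lemma main_ineq (psi : State n) : inBosonSpace l psi ->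
  (\sum_(g : {ffun Mode n -> 'I_l.+1} | inSector l (toOcc g)) `|Top l R y psi (toOcc g)| ^+ 2) * l%:R
   <= (R ^ 10)%:R * \sum_(g : {ffun Mode n -> 'I_l.+1} | inSector l (toOcc g)) `|psi (toOcc g)| ^+ 2.
Proof.
move=> hpsi.
set S2 := \sum_(g : {ffun Mode n -> 'I_l.+1} | inSector l (toOcc g)) `|psi (toOcc g)| ^+ 2.
have hl : (0 : algC) < l%:R by rewrite ltr0n (leq_ltn_trans _ RL).
have S2ge : 0 <= S2 by apply: sumr_ge0 => g _; rewrite exprn_ge0.
set c := (l%:R^-1) ^+ 2 : algC.
have cge : 0 <= c by rewrite exprn_ge0 // invr_ge0 ler0n.
have h1 : \sum_(g : {ffun Mode n -> 'I_l.+1} | inSector l (toOcc g)) `|Top l R y psi (toOcc g)| ^+ 2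
    <= (R.+2 * R.+1)%:R * (c * colB%:R * S2).
  apply: (@le_trans _ _ (\sum_(g : {ffun Mode n -> 'I_l.+1} | inSector l (toOcc g))
     (R.+2 * R.+1)%:R * \sum_x \sum_x' `|gamma (toOcc g) x x'| ^+ 2 * `|psi (W (toOcc g) x x')| ^+ 2)).
    by apply: ler_sum => g hs; apply: step1.
  rewrite -mulr_sumr; apply: ler_wpM2l => //.
  rewrite exchange_big /=.
  apply: (@le_trans _ _ (\sum_x \sum_x' \sum_(g : {ffun Mode n -> 'I_l.+1} | inSector l (toOcc g))
      c * (ColW (toOcc g) x x')%:R * `|psi (toOcc g)| ^+ 2)).
    apply: ler_sum => x _; rewrite exchange_big /=; apply: ler_sum => x' _; exact: inner.
  have -> : \sum_x \sum_x' \sum_(g : {ffun Mode n -> 'I_l.+1} | inSector l (toOcc g))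
      c * (ColW (toOcc g) x x')%:R * `|psi (toOcc g)| ^+ 2 =
      \sum_(g : {ffun Mode n -> 'I_l.+1} | inSector l (toOcc g)) \sum_x \sum_x'
      c * (ColW (toOcc g) x x')%:R * `|psi (toOcc g)| ^+ 2.
    rewrite [RHS]exchange_big /=; apply: eq_bigr => x _; by rewrite [RHS]exchange_big.
  rewrite /S2 mulr_sumr; apply: ler_sum => g hs.
  rewrite (eq_bigr (fun x => c * (\sum_x' ColW (toOcc g) x x')%:R * `|psi (toOcc g)| ^+ 2)); last first.
    by move=> x _; rewrite natr_sum mulr_sumr mulr_suml.
  rewrite -mulr_suml -mulr_sumr -natr_sum.
  apply: ler_wpM2r; first by rewrite exprn_ge0.
  apply: ler_wpM2l => //; rewrite ler_nat; exact: col_all.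
apply: le_trans (ler_wpM2r (ler0n _ l) h1) _.
have e : (R.+2 * R.+1)%:R * (c * colB%:R * S2) * l%:R =
    ((R.+2 * R.+1 * colB)%N%:R / l%:R) * S2.
  have hl0 : (l%:R : algC) != 0 by rewrite gt_eqF.
  by rewrite /c !natrM; field.
rewrite e; apply: ler_wpM2r => //.
by rewrite ler_pdivrMr // -natrM ler_nat; exact: numeric.
Qed.

End Pf.

Unset Implicit Arguments.

Theorem mainTheorem16 (n l R : nat) (y : Mode n) :
  (R < l)%N -> y != mode0 n ->
  forall psi : State n, inBosonSpace l psi ->
    bnorm l (Top l R y psi) <= (R%:R) ^+ 5 / sqrtC (l%:R) * bnorm l psi.
Proof.
move=> RL y0 psi hpsi; rewrite /bnorm.
set S1 := \sum_(g | _) _.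
set S2 := \sum_(g | _) _.
have hl : (0 : algC) < l%:R by rewrite ltr0n (leq_ltn_trans _ RL).
have S1ge : 0 <= S1 by apply: sumr_ge0 => g _; rewrite exprn_ge0.
have S2ge : 0 <= S2 by apply: sumr_ge0 => g _; rewrite exprn_ge0.
have hsl : 0 < sqrtC (l%:R : algC) by rewrite sqrtC_gt0.
rewrite mulrAC ler_pdivlMr //.
have e1 : sqrtC S1 * sqrtC (l%:R : algC) = sqrtC (S1 * l%:R).
  by rewrite sqrtCM ?nnegrE ?ler0n.
have e2 : (R%:R : algC) ^+ 5 * sqrtC S2 = sqrtC ((R ^ 10)%:R * S2).
  rewrite sqrtCM ?nnegrE ?ler0n // natrX.
  by rewrite -[10%N]/(5 * 2)%N exprM sqrCK // exprn_ge0 // ler0n.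
rewrite e1 e2 ler_sqrtC ?nnegrE ?mulr_ge0 ?ler0n //.
exact: (main_ineq RL y0 hpsi).
Qed.
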